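(* Let ${\bf F}^*_0(z)=\sum_n {\bf f}^*_0(n)z^n$, where ${\bf f}^*_0(n)$ is the total weight of secondary structures over $[n]$ containing the arc $(1,n)$, and let ${\bf F}_0(z)=\sum_n {\bf f}_0(n)z^n$, where ${\bf f}_0(n)$ is the total weight of all secondary structures over $[n]$ (including the empty structure for $n=0$). Then $$ {\bf F}^*_0(z)=\frac{6}{16}e^{0.5}z^2\frac{z}{1-z}+\frac{6}{16}e^{1}z^2\left(\frac{1}{1-z}\right)^2{\bf F}^*_0(z)+\frac{6}{16}e^{-5}z^2\frac{\left({\bf F}^*_0(z)\frac{1}{1-z}\right)^2}{1-{\bf F}^*_0(z)\frac{1}{1-z}}\frac{1}{1-z}, $$ ${\bf F}^*_0(z)$ is the unique formal power series with zero constant term satisfying this equation, and $$ {\bf F}_0(z)=\frac{1}{1-z}\cdot\frac{1}{1-{\bf F}^*_0(z)\frac{1}{1-z}}. $$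
   Context: A secondary structure over $[n]=\{1,\dots,n\}$ is a set of arcs $(i,j)$, $1\le i<j\le n$, each vertex in at most one arc, with no two arcs crossing (no $i<k<j<l$ with $(i,j),(k,l)$ both arcs) and no arc of the form $(i,i+1)$. For an arc $(i,j)$, the arcs directly nested in it are the arcs $(k,l)$ with $i<k<l<j$ not contained in any other arc $(k',l')$ with $i<k'<k<l<l'<j$. The loop closed by $(i,j)$ is a hairpin loop if $(i,j)$ has no directly nested arc, an interior loop (including stacks and bulges) if it has exactly one directly nested arc, and a multi-loop if it has at least two directly nested arcs. The weight of a secondary structure is $(6/16)^{\#\mathrm{arcs}}\cdot e^{0.5\,h}\cdot e^{1\cdot i}\cdot e^{-5\,m}$, where $h,i,m$ are the numbers of hairpin loops, interior loops and multi-loops, respectively, and $e$ is Euler's number. *)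

(* Defs.v *)
From mathcomp Require Import all_boot all_order all_algebra.
From mathcomp Require Import reals sequences exp.
Set Implicit Arguments. Unset Strict Implicit. Unset Printing Implicit Defensive.
Import Order.TTheory GRing.Theory Num.Theory.
Local Open Scope ring_scope.

(* Vertex k of [n] = {1..n} is represented by the ordinal (k-1) : 'I_n.
   An arc (i,j) is a pair (a.1, a.2) of ordinals. *)
Definition arc n := ('I_n * 'I_n)%type.

Definition secondary n (S : {set arc n}) : bool :=
  [forall a in S, (a.1.+1 < a.2)%N] &&
  [forall a in S, forall b in S, (a != b) ==>
     [&& a.1 != b.1, a.1 != b.2, a.2 != b.1 & a.2 != b.2]] &&
  [forall a in S, forall b in S,
     ~~ [&& (a.1 < b.1)%N, (b.1 < a.2)%N & (a.2 < b.2)%N]].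

Definition directly_nested n (S : {set arc n}) (a b : arc n) : bool :=
  [&& b \in S, (a.1 < b.1)%N, (b.1 < b.2)%N, (b.2 < a.2)%N &
   ~~ [exists c in S, [&& (a.1 < c.1)%N, (c.1 < b.1)%N, (b.2 < c.2)%N & (c.2 < a.2)%N]]].

Definition n_nested n (S : {set arc n}) (a : arc n) : nat :=
  #|[set b | directly_nested S a b]|.

Definition n_hairpin n (S : {set arc n}) : nat := #|[set a in S | n_nested S a == 0%N]|.
Definition n_interior n (S : {set arc n}) : nat := #|[set a in S | n_nested S a == 1%N]|.
Definition n_multi n (S : {set arc n}) : nat := #|[set a in S | (2 <= n_nested S a)%N]|.

Definition weight (R : realType) n (S : {set arc n}) : R :=
  (6 / 16) ^+ #|S| * expR (2^-1 * (n_hairpin S)%:R) * expR (1 * (n_interior S)%:R)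
  * expR (-5 * (n_multi S)%:R).

Definition f0 (R : realType) (n : nat) : R :=
  \sum_(S : {set arc n} | secondary S) weight R S.

Definition f0star (R : realType) (n : nat) : R :=
  \sum_(S : {set arc n} | secondary S &&
        [exists a in S, (val a.1 == 0%N) && (val a.2 == n.-1)]) weight R S.

Definition fps (R : realType) := nat -> R.

Section FPS.
Variable R : realType.
Definition fps_add (f g : fps R) : fps R := fun n => f n + g n.
Definition fps_scale (c : R) (f : fps R) : fps R := fun n => c * f n.
Definition fps_mul (f g : fps R) : fps R :=
  fun n => \sum_(i < n.+1) f i * g (n - i)%N.
Definition fps_one : fps R := fun n => (n == 0%N)%:R.
Definition fps_Xn (k : nat) : fps R := fun n => (n == k)%:R.
Definition fps_pow (f : fps R) (k : nat) : fps R := iter k (fps_mul f) fps_one.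
Definition fps_geom : fps R := fun _ => 1.
(* 1/(1-G) = sum_k G^k, the inverse of 1 - G, for G with zero constant term
   (the coefficient of z^n only involves G^k for k <= n). *)
Definition fps_inv1m (G : fps R) : fps R :=
  fun n => \sum_(k < n.+1) fps_pow G k n.
End FPS.

Definition rhs_eq (R : realType) (F : fps R) : fps R :=
  let c : R := 6 / 16 in
  let z2 := fps_Xn R 2 in
  let Fg := fps_mul F (fps_geom R) in
  fps_add
    (fps_scale (c * expR (2^-1))
       (fps_mul z2 (fps_mul (fps_Xn R 1) (fps_geom R))))
  (fps_add
    (fps_scale (c * expR 1)
       (fps_mul z2 (fps_mul (fps_pow (fps_geom R) 2) F)))
    (fps_scale (c * expR (-5))
       (fps_mul z2 (fps_mul (fps_mul (fps_pow Fg 2) (fps_inv1m Fg)) (fps_geom R))))).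

(* Main.v *)
Require Import Defs.
From mathcomp Require Import all_boot all_order all_algebra.
From mathcomp Require Import reals sequences exp.
From mathcomp Require Import zify ring lra.
From Stdlib Require Import FunctionalExtensionality.
Unset Printing Implicit Defensive.
Import Order.TTheory GRing.Theory Num.Theory.
Local Open Scope ring_scope.

Section FpsAlg.
Variable R : realType.
Implicit Types (f g G : fps R) (p q : {poly R}).

Definition tr (n : nat) f : {poly R} := \poly_(i < n.+1) f i.
Definition rep (n : nat) f p := forall i, (i <= n)%N -> f i = p`_i.

Lemma rep_tr n f : rep n f (tr n f).
Proof. by move=> i hi; rewrite coef_poly ltnS hi. Qed.

Lemma rep_mul n f g p q : rep n f p -> rep n g q -> rep n (fps_mul f g) (p * q).
Proof.
move=> hf hg i hi; rewrite /fps_mul coefM; apply: eq_bigr => j _.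
have hj : (j <= i)%N by rewrite -ltnS.
rewrite hf ?hg //; [exact: leq_trans (leq_subr _ _) hi | exact: leq_trans hj hi].
Qed.

Lemma rep_add n f g p q : rep n f p -> rep n g q -> rep n (fps_add f g) (p + q).
Proof. by move=> hf hg i hi; rewrite /fps_add coefD hf ?hg. Qed.

Lemma rep_scale n c f p : rep n f p -> rep n (fps_scale c f) (c *: p).
Proof. by move=> hf i hi; rewrite /fps_scale coefZ hf. Qed.

Lemma rep_one n : rep n (fps_one R) 1.
Proof. by move=> i _; rewrite coef1. Qed.

Lemma rep_Xn n k : rep n (fps_Xn R k) 'X^k.
Proof. by move=> i _; rewrite coefXn. Qed.

Lemma rep_pow n f p k : rep n f p -> rep n (fps_pow f k) (p ^+ k).
Proof.
move=> hf; elim: k => [|k IH]; first exact: rep_one.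
by rewrite exprS; apply: rep_mul.
Qed.

Lemma coef_low_exp p k i : p`_0 = 0 -> (i < k)%N -> (p ^+ k)`_i = 0.
Proof.
move=> p0; elim: k i => [//|k IH] i hi.
rewrite exprS coefM big1 // => j _.
case: j => [[|j'] hj] /=; first by rewrite p0 mul0r.
rewrite IH ?mulr0 //; lia.
Qed.

Lemma coef_low_expM p q k i : p`_0 = 0 -> (i < k)%N -> (p ^+ k * q)`_i = 0.
Proof.
move=> p0 hi; rewrite coefM big1 // => j _.
rewrite coef_low_exp ?mul0r //; have := ltn_ord j; lia.
Qed.

Lemma rep_inv1m n G p : rep n G p -> G 0%N = 0 ->
  rep n (fps_inv1m G) (\sum_(k < n.+1) p ^+ k).
Proof.
move=> hG G0 i hi; have p0 : p`_0 = 0 by rewrite -hG.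
rewrite /fps_inv1m coef_sum (big_ord_widen n.+1 (fun k => fps_pow G k i)) //.
rewrite big_mkcond /=; apply: eq_bigr => k _.
case: ifP => hk; first by rewrite (rep_pow n G p k hG i hi).
rewrite coef_low_exp //; lia.
Qed.

Lemma rep_geom_sum n f : fps_mul f (fps_geom R) n = \sum_(j < n.+1) f j.
Proof. by apply: eq_bigr => j _; rewrite /fps_geom mulr1. Qed.

Lemma Xn2_shift f n : fps_mul (fps_Xn R 2) f n = if (n < 2)%N then 0 else f (n - 2)%N.
Proof.
rewrite (rep_mul _ _ _ _ _ (rep_Xn n 2) (rep_tr n f) n (leqnn n)) coefXnM.
case: ifP => // _; rewrite coef_poly; case: ifP => //; lia.
Qed.

End FpsAlg.
Arguments tr {R} n f.
Arguments rep {R} n f p.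
Arguments rep_tr {R} n f.
Arguments rep_mul {R n f g p q}.
Arguments rep_add {R n f g p q}.
Arguments rep_scale {R n c f p}.
Arguments rep_one {R} n.
Arguments rep_Xn {R} n k.
Arguments rep_pow {R n f p} k.
Arguments coef_low_exp {R p k i}.
Arguments coef_low_expM {R p q k i}.
Arguments rep_inv1m {R n G p}.
Arguments rep_geom_sum {R} n f.
Arguments Xn2_shift {R} f n.

Set Implicit Arguments. Unset Strict Implicit.
Section Comb.
Variable R : realType.
Variable N : nat.
Local Notation A := (Defs.arc N).
Implicit Types (S T U V : {set A}) (a b c : A).

Lemma arc_eqP a b : a = b <-> ((a.1 : nat) = b.1 /\ (a.2 : nat) = b.2).
Proof.
split; first by move=> ->.
by case: a b => [x y] [x' y'] /= [/val_inj -> /val_inj ->].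
Qed.

Lemma sec_arc S a : secondary S -> a \in S -> (a.1.+1 < a.2)%N.
Proof. by case/andP => /andP[/forall_inP h _] _ /h. Qed.

Lemma sec_lt S a : secondary S -> a \in S -> (a.1 < a.2)%N.
Proof. by move=> sS aS; have := sec_arc sS aS; lia. Qed.

Lemma sec_vert S a b : secondary S -> a \in S -> b \in S -> a != b ->
  [/\ (a.1 : nat) <> b.1, (a.1 : nat) <> b.2, (a.2 : nat) <> b.1 & (a.2 : nat) <> b.2].
Proof.
case/andP => /andP[_ /forall_inP h] _ aS bS ab.
move/forall_inP: (h a aS) => /(_ b bS) /implyP /(_ ab) /and4P[h1 h2 h3 h4].
by split; apply/eqP.
Qed.

Lemma sec_cross S a b : secondary S -> a \in S -> b \in S ->
  ~~ [&& (a.1 < b.1)%N, (b.1 < a.2)%N & (a.2 < b.2)%N].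
Proof.
case/andP => _ /forall_inP h aS bS.
by move/forall_inP: (h a aS) => /(_ b bS).
Qed.

Lemma sec_same S a b : secondary S -> a \in S -> b \in S ->
  ((a.1 : nat) = b.1 \/ (a.1 : nat) = b.2 \/ (a.2 : nat) = b.1 \/ (a.2 : nat) = b.2) -> a = b.
Proof.
move=> sS aS bS h; apply/eqP; apply/negPn/negP => ab.
by case: (sec_vert sS aS bS ab) => h1 h2 h3 h4; case: h => [|[|[]]].
Qed.

Lemma secI S :
  (forall a, a \in S -> (a.1.+1 < a.2)%N) ->
  (forall a b, a \in S -> b \in S -> a != b ->
     [/\ (a.1 : nat) <> b.1, (a.1 : nat) <> b.2, (a.2 : nat) <> b.1 & (a.2 : nat) <> b.2]) ->
  (forall a b, a \in S -> b \in S -> ~~ [&& (a.1 < b.1)%N, (b.1 < a.2)%N & (a.2 < b.2)%N]) ->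
  secondary S.
Proof.
move=> h1 h2 h3; apply/andP; split; [apply/andP; split|].
- by apply/forall_inP.
- apply/forall_inP => a aS; apply/forall_inP => b bS; apply/implyP => ab.
  by case: (h2 a b aS bS ab) => /eqP-> /eqP-> /eqP-> /eqP->.
- apply/forall_inP => a aS; apply/forall_inP => b bS; exact: h3.
Qed.

Lemma sec_sub S T : T \subset S -> secondary S -> secondary T.
Proof.
move=> /subsetP sub sS; apply: secI.
- by move=> a /sub aS; exact: sec_arc sS aS.
- by move=> a b /sub aS /sub bS; exact: sec_vert sS aS bS.
- by move=> a b /sub aS /sub bS; exact: sec_cross sS aS bS.
Qed.

Definition tau (k : nat) : R := if k == 0%N then 2^-1 else if k == 1%N then 1 else -5.
Definition phi (k : nat) : R := 6 / 16 * expR (tau k).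
Definition strin a c := (a.1 < c.1)%N && (c.2 < a.2)%N.

Lemma sum_const_set (P : pred A) (x : R) :
  \sum_(a | P a) x = x * (#|[set a | P a]|)%:R.
Proof.
rewrite (eq_bigl (fun a => a \in [set a | P a])) => [|a]; last by rewrite inE.
by rewrite sumr_const mulr_natr.
Qed.

Lemma weightE S : weight R S = \prod_(a in S) phi (n_nested S a).
Proof.
rewrite /phi big_split /= prodr_const -expR_sum /weight -!mulrA -!expRD.
congr (_ * expR _).
rewrite (bigID (fun a => n_nested S a == 0%N)) /=.
rewrite (eq_bigr (fun _ => 2^-1)) => [|a /andP[_ /eqP ->]]; last by [].
rewrite sum_const_set; congr (_ + _).
rewrite (bigID (fun a => n_nested S a == 1%N)) /=.
congr (_ + _).
  rewrite (eq_bigr (fun _ => 1)) => [|a /andP[/andP[_ h0] /eqP ->]]; last by [].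
  rewrite sum_const_set /n_interior; congr (_ * _%:R).
  apply: eq_card => a; rewrite !inE; case: (n_nested S a) => [|[|k]]; by rewrite ?andbF ?andbT.
rewrite (eq_bigr (fun _ => -5)) => [|a /andP[/andP[_ h0] h1]]; last first.
  by rewrite /tau; move: h0 h1; case: (n_nested S a) => [|[|k]].
rewrite sum_const_set /n_multi; congr (_ * _%:R).
apply: eq_card => a; rewrite !inE; case: (n_nested S a) => [|[|k]]; by rewrite ?andbF ?andbT.
Qed.

Lemma nn_local S S' a : (forall c, strin a c -> (c \in S) = (c \in S')) ->
  n_nested S a = n_nested S' a.
Proof.
move=> h; apply: eq_card => b; rewrite !inE /directly_nested.
have he : [exists c in S, [&& (a.1 < c.1)%N, (c.1 < b.1)%N, (b.2 < c.2)%N & (c.2 < a.2)%N]]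
        = [exists c in S', [&& (a.1 < c.1)%N, (c.1 < b.1)%N, (b.2 < c.2)%N & (c.2 < a.2)%N]].
  apply/existsP/existsP => -[c /andP[cS /and4P[h1 h2 h3 h4]]]; exists c.
    by rewrite -h ?cS ?h1 ?h2 ?h3 ?h4 // /strin h1 h4.
  by rewrite h ?cS ?h1 ?h2 ?h3 ?h4 // /strin h1 h4.
rewrite he; case h1: (a.1 < b.1)%N; rewrite ?andFb ?andbF //.
case h2: (b.2 < a.2)%N; rewrite ?andFb ?andbF ?andbT //.
by rewrite h // /strin h1 h2.
Qed.

Definition istop S b := [forall c in S, ~~ strin c b].
Definition ntop S := #|[set b in S | istop S b]|.

Section Side.
Variables (U V : {set A}) (mid : nat).
Hypotheses (sU : secondary U) (sV : secondary V).
Hypothesis hU : forall a, a \in U -> (a.2 < mid)%N.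
Hypothesis hV : forall a, a \in V -> (mid <= a.1)%N.

Lemma side_notin a : a \in U -> a \notin V.
Proof. move=> aU; apply/negP => aV; have := hU aU; have := hV aV; have := sec_lt sU aU; lia. Qed.

Lemma side_sec : secondary (U :|: V).
Proof.
apply: secI.
- by move=> a; rewrite inE => /orP[] ?; [apply: (sec_arc sU) | apply: (sec_arc sV)].
- move=> a b; rewrite !inE => /orP[] aS /orP[] bS ab.
  + exact: (sec_vert sU).
  + have := hU aS; have := hV bS; have := sec_lt sU aS; have := sec_lt sV bS; split; lia.
  + have := hV aS; have := hU bS; have := sec_lt sV aS; have := sec_lt sU bS; split; lia.
  + exact: (sec_vert sV).
- move=> a b; rewrite !inE => /orP[] aS /orP[] bS.
  + exact: (sec_cross sU).
  + have := hU aS; have := hV bS; have := sec_lt sU aS; have := sec_lt sV bS.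
    by move=> *; apply/negP => /and3P[*]; lia.
  + have := hV aS; have := hU bS; have := sec_lt sV aS; have := sec_lt sU bS.
    by move=> *; apply/negP => /and3P[*]; lia.
  + exact: (sec_cross sV).
Qed.

Lemma side_ntop : ntop (U :|: V) = (ntop U + ntop V)%N.
Proof.
have e : [set b in U :|: V | istop (U :|: V) b] =
         [set b in U | istop U b] :|: [set b in V | istop V b].
  apply/setP => b; rewrite !inE.
  case bU: (b \in U); case bV: (b \in V) => //=.
  - by move: (side_notin bU); rewrite bV.
  - rewrite orbF /istop; apply/forall_inP/forall_inP => h c cS; first by apply: h; rewrite inE cS.
    move: cS; rewrite inE => /orP[]; first exact: h.
    move=> cV; rewrite /strin; have := hU bU; have := hV cV; have := sec_lt sU bU.
    have := sec_lt sV cV; move=> *; apply/negP => /andP[*]; lia.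
  - rewrite /istop; apply/forall_inP/forall_inP => h c cS; first by apply: h; rewrite inE cS orbT.
    move: cS; rewrite inE => /orP[]; last exact: h.
    move=> cU; rewrite /strin; have := hV bV; have := hU cU; have := sec_lt sV bV.
    have := sec_lt sU cU; move=> *; apply/negP => /andP[*]; lia.
rewrite /ntop e cardsU.
suff -> : [set b in U | istop U b] :&: [set b in V | istop V b] = set0 by rewrite cards0 subn0.
apply/setP => b; rewrite !inE; case bU: (b \in U) => //=.
by rewrite (negbTE (side_notin bU)) ?andFb ?andbF.
Qed.

Lemma side_weight : weight R (U :|: V) = weight R U * weight R V.
Proof.
rewrite !weightE (eq_bigl [predU U & V]) => [|a]; last by rewrite !inE.
rewrite bigU; last first.
  by rewrite disjoint_subset; apply/subsetP => a aU; rewrite inE side_notin.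
congr (_ * _); apply: eq_bigr => a aS; congr (phi _); apply: nn_local => c.
- rewrite /strin inE => /andP[h1 h2]; case cV: (c \in V); rewrite ?orbF //.
  have := hU aS; have := hV cV; have := sec_lt sV cV; lia.
- rewrite /strin inE => /andP[h1 h2]; case cU: (c \in U) => //=.
  have := hV aS; have := hU cU; have := sec_lt sU cU; lia.
Qed.

End Side.

Lemma sec_cross' S a b : secondary S -> a \in S -> b \in S ->
  (a.1 < b.1)%N -> (b.1 < a.2)%N -> (b.2 <= a.2)%N.
Proof.
move=> sS aS bS h1 h2; have := sec_cross sS aS bS; rewrite h1 h2 /=.
by rewrite -leqNgt.
Qed.

Lemma sec_set0 : secondary (set0 : {set A}).
Proof. by apply: secI => a; rewrite inE. Qed.

Lemma ntop_set0 : ntop set0 = 0%N.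
Proof. by rewrite /ntop; apply/eqP; rewrite cards_eq0; apply/eqP/setP => b; rewrite !inE. Qed.

Lemma ntop_le S : (ntop S <= N * N)%N.
Proof.
apply: leq_trans (_ : #|S| <= N * N)%N.
  by apply: subset_leq_card; apply/subsetP => b; rewrite inE => /andP[].
by apply: leq_trans (max_card _) _; rewrite card_prod card_ord.
Qed.

Definition inb i L a := (i <= a.1)%N && (a.2 < i + L)%N.
Definition inS i L S := [forall a in S, inb i L a].
Definition hasarc i j S := [exists a in S, (nat_of_ord a.1 == i) && (nat_of_ord a.2 == j)].
Definition W k i L := \sum_(S | [&& secondary S, inS i L S & ntop S == k]) weight R S.
Definition Wp k i L := \sum_(S | [&& secondary S, inS i L S & (ntop S).+1 == k]) weight R S.
Definition Wst i L := \sum_(S | [&& secondary S, inS i L S & hasarc i (i + L).-1 S]) weight R S.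
Definition K := (N * N).+1.

Lemma inSP i L S a : inS i L S -> a \in S -> (i <= a.1)%N /\ (a.2 < i + L)%N.
Proof. by move/forall_inP => h /h /andP[]. Qed.

Lemma inSI i L S : (forall a, a \in S -> (i <= a.1)%N /\ (a.2 < i + L)%N) -> inS i L S.
Proof. by move=> h; apply/forall_inP => a /h [h1 h2]; apply/andP. Qed.

Lemma hasarcE i j S a0 : (a0.1 : nat) = i -> (a0.2 : nat) = j -> hasarc i j S = (a0 \in S).
Proof.
move=> e1 e2; apply/existsP/idP => [[a /andP[aS /andP[/eqP h1 /eqP h2]]] | h].
  by have -> : a0 = a by apply/arc_eqP; split; [rewrite e1 -h1 | rewrite e2 -h2].
by exists a0; rewrite h e1 e2 !eqxx.
Qed.

Lemma hasarcP i j S : hasarc i j S ->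
  exists a : A, [/\ a \in S, (a.1 : nat) = i & (a.2 : nat) = j].
Proof. by case/existsP => a /andP[aS /andP[/eqP h1 /eqP h2]]; exists a. Qed.

Lemma Wp0 i L : Wp 0 i L = 0.
Proof. by rewrite /Wp big_pred0 // => S /=; rewrite !andbF. Qed.

Lemma WpS k i L : Wp k.+1 i L = W k i L.
Proof. by []. Qed.

Lemma sec_empty i S : secondary S -> inS i 0 S -> S = set0.
Proof.
move=> sS iS; apply/setP => a; rewrite inE; apply/negbTE/negP => aS.
have [h1 h2] := inSP iS aS; have := sec_lt sS aS; lia.
Qed.

Lemma W0 k i : W k i 0 = (k == 0%N)%:R.
Proof.
rewrite /W; case: k => [|k].
  rewrite (big_pred1 set0) ?weightE ?big_set0 // => S /=.
  apply/idP/eqP => [/and3P[sS iS _]|->]; first exact: sec_empty sS iS.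
  rewrite sec_set0 ntop_set0 andbT /=; by apply/forall_inP => a; rewrite inE.
rewrite big_pred0 // => S; apply/negP => /and3P[sS iS].
by rewrite (sec_empty sS iS) ntop_set0.
Qed.

Lemma Wst_small i L : (L <= 2)%N -> Wst i L = 0.
Proof.
move=> hL; rewrite /Wst big_pred0 // => S; apply/negP.
move=> /and3P[sS _ /hasarcP[a [aS h1 h2]]].
have := sec_arc sS aS; lia.
Qed.

Lemma sum_by_ntop (P : pred {set A}) (F : nat -> {set A} -> R) :
  \sum_(T | P T) F (ntop T) T = \sum_(k < K) \sum_(T | P T && (ntop T == k)) F k T.
Proof.
rewrite (partition_big (fun T => inord (ntop T) : 'I_K) xpredT) //=.
apply: eq_bigr => k _; apply: eq_big => T.
  by rewrite -val_eqE /= inordK // ltnS ntop_le.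
by move=> /andP[_ /eqP <-]; rewrite inordK // ltnS ntop_le.
Qed.

Lemma outer_sec a0 T : secondary T -> (a0.1.+1 < a0.2)%N ->
  (forall b, b \in T -> (a0.1 < b.1)%N /\ (b.2 < a0.2)%N) -> secondary (a0 |: T).
Proof.
move=> sT h0 hb; apply: secI.
- by move=> a; rewrite in_setU1 => /orP[/eqP->//|aT]; exact: sec_arc sT aT.
- move=> a b; rewrite !in_setU1 => /orP[/eqP->|aT] /orP[/eqP->|bT] ab.
  + by rewrite eqxx in ab.
  + have [h1 h2] := hb b bT; have := sec_lt sT bT; split; lia.
  + have [h1 h2] := hb a aT; have := sec_lt sT aT; split; lia.
  + exact: sec_vert sT aT bT ab.
- move=> a b; rewrite !in_setU1 => /orP[/eqP->|aT] /orP[/eqP->|bT].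
  + by rewrite ltnn.
  + have [h1 h2] := hb b bT; apply/negP => /and3P[*]; lia.
  + have [h1 h2] := hb a aT; apply/negP => /and3P[*]; lia.
  + exact: sec_cross sT aT bT.
Qed.

Lemma outer_weight a0 T : secondary T -> a0 \notin T ->
  (forall b, b \in T -> (a0.1 < b.1)%N /\ (b.2 < a0.2)%N) ->
  weight R (a0 |: T) = phi (ntop T) * weight R T.
Proof.
move=> sT a0T hb; rewrite !weightE big_setU1 //=; congr (phi _ * _).
  rewrite /n_nested /ntop; apply: eq_card => b; rewrite !inE /directly_nested /istop.
  case bT: (b \in T); last first.
    by rewrite in_setU1 bT orbF; case: eqP => [->|]; rewrite ?ltnn ?andbF.
  have [h1 h2] := hb b bT; have h3 := sec_lt sT bT.
  rewrite in_setU1 bT orbT h1 h2 h3 /=.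
  apply/negP/forall_inP => [hne c cT | hall].
    apply/negP => /andP[c1 c2]; apply: hne; apply/existsP; exists c.
    have [d1 d2] := hb c cT; rewrite in_setU1 cT orbT /=; apply/and4P; split; lia.
  move/existsP => [c /andP[cS /and4P[e1 e2 e3 e4]]]; move: cS; rewrite in_setU1.
  case/orP => [/eqP ec|cT]; first by rewrite ec ltnn in e1.
  by have := hall c cT; rewrite /strin e2 e3.
apply: eq_bigr => a aT; congr (phi _); apply: nn_local => c.
rewrite /strin in_setU1 => /andP[c1 c2]; case: eqP => // ec.
have [d1 d2] := hb a aT; rewrite ec in c1; lia.
Qed.

Lemma Wst_rec i L : (i + L.+3 <= N)%N ->
  Wst i L.+3 = \sum_(k < K) phi k * W k i.+1 L.+1.
Proof.
move=> hN.
have hx : (i < N)%N by lia.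
have hy : (i + L.+2 < N)%N by lia.
pose a0 : A := (Ordinal hx, Ordinal hy).
have a01 : (a0.1 : nat) = i by [].
have a02 : (a0.2 : nat) = (i + L.+3).-1 by rewrite /=; lia.
transitivity (\sum_(T | secondary T && inS i.+1 L.+1 T) phi (ntop T) * weight R T); last first.
  rewrite (sum_by_ntop _ (fun k T => phi k * weight R T)); apply: eq_bigr => k _; rewrite /W big_distrr /=.
  by apply: eq_bigl => T; rewrite andbA.
rewrite /Wst (reindex_onto (fun T => a0 |: T) (fun S => S :\ a0)) /=; last first.
  by move=> S /and3P[_ _]; rewrite (hasarcE _ a01 a02) => h; rewrite setD1K.
have bnd : forall T, inS i.+1 L.+1 T -> forall b, b \in T -> (a0.1 < b.1)%N /\ (b.2 < a0.2)%N.
  by move=> T iT b bT; have [h1 h2] := inSP iT bT; rewrite a01 /=; split; lia.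
have a0T : forall T, inS i.+1 L.+1 T -> a0 \notin T.
  by move=> T iT; apply/negP => /(inSP iT); rewrite a01; lia.
apply: eq_big => T.
  apply/idP/idP => [/andP[/and3P[sS iS hS] /eqP eT] | /andP[sT iT]].
    rewrite (hasarcE _ a01 a02) in hS.
    rewrite -eT; apply/andP; split; first by apply: sec_sub sS; apply: subsetDl.
    apply: inSI => b; rewrite in_setD1 => /andP[ba0 bS].
    have [h1 h2] := inSP iS bS.
    have [d1 _ _ d4] := sec_vert sS hS bS (contra_neq (fun h => esym h) ba0).
    rewrite a01 a02 in d1 d4; lia.
  rewrite setU1K ?a0T // eqxx andbT (hasarcE _ a01 a02) setU11 andbT.
  rewrite outer_sec //=; [| by rewrite /a0 /=; lia | exact: bnd iT].
  apply: inSI => b; rewrite in_setU1 => /orP[/eqP->|bT]; first by rewrite /a0 /=; lia.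
  have [h1 h2] := inSP iT bT; lia.
move=> /andP[/and3P[sS iS hS] /eqP eT].
have sT : secondary T by rewrite -eT; apply: sec_sub sS; apply: subsetDl.
have iT : inS i.+1 L.+1 T.
  rewrite (hasarcE _ a01 a02) in hS.
  rewrite -eT; apply: inSI => b; rewrite in_setD1 => /andP[ba0 bS].
  have [h1 h2] := inSP iS bS.
  have [d1 _ _ d4] := sec_vert sS hS bS (contra_neq (fun h => esym h) ba0).
  rewrite a01 a02 in d1 d4; lia.
by rewrite outer_weight // ?a0T //; apply: bnd.
Qed.

Definition at1 i (a : A) := nat_of_ord a.1 == i.

Lemma at1P i S : [exists a in S, at1 i a] -> exists a : A, a \in S /\ (a.1 : nat) = i.
Proof. by case/existsP => a /andP[aS /eqP h]; exists a. Qed.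

Lemma hasarc_at1 i j S : hasarc i j S -> [exists a in S, at1 i a].
Proof. by case/hasarcP => a [aS h1 _]; apply/existsP; exists a; rewrite aS /at1 h1 eqxx. Qed.

Lemma inS_shift i L S : inS i L.+1 S && ~~ [exists a in S, at1 i a] = inS i.+1 L S.
Proof.
apply/idP/idP => [/andP[h hn] | h].
  apply: inSI => a aS; have [h1 h2] := inSP h aS.
  have : nat_of_ord a.1 != i by apply: contra hn => ha; apply/existsP; exists a; rewrite aS.
  move/eqP => ?; lia.
apply/andP; split.
  by apply: inSI => a aS; have [h1 h2] := inSP h aS; split; lia.
apply/negP => /at1P[a [aS e]]; have [h1 _] := inSP h aS; lia.
Qed.

Lemma one_term i L S (x : R) : secondary S -> inS i L.+1 S -> [exists a in S, at1 i a] ->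
  \sum_(m < L.+2) (if hasarc i (i + m).-1 S then x else 0) = x.
Proof.
move=> sS iS /at1P[a [aS a1]].
have [_ a2] := inSP iS aS; have a12 := sec_arc sS aS.
have hm : (a.2.+1 - i < L.+2)%N by lia.
rewrite -big_mkcond (big_pred1 (Ordinal hm)) // => m /=.
apply/idP/eqP => [/hasarcP[b [bS b1 b2]] | em].
  have eb : b = a by apply: (sec_same sS bS aS); left; lia.
  by apply: val_inj => /=; rewrite eb in b2; lia.
rewrite (hasarcE _ a1 (_ : (a.2 : nat) = (i + m).-1)) // em /=; lia.
Qed.

Lemma ntop1_char S a0 (b : A) : secondary S -> a0 \in S ->
  (forall b, b \in S -> (a0.1 <= b.1)%N /\ (b.2 <= a0.2)%N) ->
  (b \in S) && istop S b = (b == a0).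
Proof.
move=> sS aS hb; case: (b =P a0) => [->|nb].
  rewrite aS /=; apply/forall_inP => c cS; have [h1 h2] := hb c cS.
  rewrite /strin; apply/negP => /andP[*]; lia.
case bS: (b \in S) => //=; apply/negP => /forall_inP /(_ a0 aS); rewrite /strin.
have [h1 h2] := hb b bS.
have [d1 _ _ d4] := sec_vert sS aS bS (introN eqP (fun e => nb (esym e))).
move/negP; apply; apply/andP; split; lia.
Qed.

Lemma ntop1 S a0 : secondary S -> a0 \in S ->
  (forall b, b \in S -> (a0.1 <= b.1)%N /\ (b.2 <= a0.2)%N) -> ntop S = 1%N.
Proof.
move=> sS aS hb; rewrite /ntop (_ : [set b in S | istop S b] = [set a0]) ?cards1 //.
by apply/setP => b; rewrite !inE; apply: ntop1_char.
Qed.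

Lemma inb_of (b : A) i L S : inS i L S -> b \in S -> inb i L b.
Proof. by move=> /forall_inP h /h. Qed.

Lemma not_inb1 (b : A) i m L' S : secondary S -> inS (i + m) L' S -> b \in S -> inb i m b = false.
Proof.
move=> sS iS bS; have [h1 h2] := inSP iS bS; have := sec_lt sS bS.
rewrite /inb => ?; apply/negP => /andP[*]; lia.
Qed.

Lemma not_inb2 (b : A) i m L' S : secondary S -> inS i m S -> b \in S -> inb (i + m) L' b = false.
Proof.
move=> sS iS bS; have [h1 h2] := inSP iS bS; have := sec_lt sS bS.
rewrite /inb => ?; apply/negP => /andP[*]; lia.
Qed.

Lemma decomp i L m S a0 (b : A) : secondary S -> inS i L.+1 S -> a0 \in S ->
  (a0.1 : nat) = i -> (a0.2 : nat) = (i + m).-1 -> (2 <= m)%N -> (m <= L.+1)%N ->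
  b \in S -> inb i m b || inb (i + m) (L.+1 - m) b.
Proof.
move=> sS iS aS a01 a02 hm1 hm2 bS; have [h1 h2] := inSP iS bS.
rewrite /inb; case: (b =P a0) => [->|nb].
  by apply/orP; left; apply/andP; split; lia.
have [d1 d2 d3 d4] := sec_vert sS aS bS (introN eqP (fun e => nb (esym e))).
have hc := sec_cross' sS aS bS; have hb := sec_lt sS bS.
rewrite a01 a02 in d1 d2 d3 d4 hc.
apply/orP; case: (ltnP b.1 (i + m)) => hb1; [left|right]; apply/andP; split; lia.
Qed.

Lemma pair_pred k i L m a0 X Y : (2 <= m)%N -> (m <= L.+1)%N ->
  (a0.1 : nat) = i -> (a0.2 : nat) = (i + m).-1 ->
  ([&& secondary (X :|: Y), inS i L.+1 (X :|: Y) & ntop (X :|: Y) == k]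
     && hasarc i (i + m).-1 (X :|: Y)
     && (([set a in X :|: Y | inb i m a], [set a in X :|: Y | inb (i + m) (L.+1 - m) a]) == (X, Y)))
  = ([&& secondary X, inS i m X & hasarc i (i + m).-1 X]
     && [&& secondary Y, inS (i + m) (L.+1 - m) Y & (ntop Y).+1 == k]).
Proof.
move=> hm1 hm2 a01 a02; rewrite !(hasarcE _ a01 a02).
have b0 : forall b : A, b \in X -> inS i m X -> (a0.1 <= b.1)%N /\ (b.2 <= a0.2)%N.
  by move=> b bX iX; have [h1 h2] := inSP iX bX; rewrite a01 a02; split; lia.
apply/idP/idP.
  move=> /andP[/andP[/and3P[sU iU nU] hU] /eqP [e1 e2]].
  have sX : secondary X by apply: sec_sub sU; apply: subsetUl.
  have sY : secondary Y by apply: sec_sub sU; apply: subsetUr.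
  have iX : inS i m X.
    apply: inSI => a aX; have : a \in [set a in X :|: Y | inb i m a] by rewrite e1.
    by rewrite inE => /andP[_ /andP[h1 h2]].
  have iY : inS (i + m) (L.+1 - m) Y.
    apply: inSI => a aY; have : a \in [set a in X :|: Y | inb (i + m) (L.+1 - m) a] by rewrite e2.
    by rewrite inE => /andP[_ /andP[h1 h2]].
  have a0X : a0 \in X.
    by rewrite -e1 inE hU /inb a01 a02 /=; apply/andP; split; lia.
  rewrite (side_ntop (mid := i + m)) // in nU; last first.
    by move=> b bY; have [h1 _] := inSP iY bY.
    by move=> b bX; have [_ h2] := inSP iX bX.
  rewrite (ntop1 sX a0X) ?add1n in nU; last by move=> b bX; apply: b0.
  by rewrite sX iX a0X sY iY nU.
move=> /andP[/and3P[sX iX a0X] /and3P[sY iY nY]].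
have hXb : forall a, a \in X -> (a.2 < i + m)%N by move=> a aX; have [_ h2] := inSP iX aX.
have hYb : forall a, a \in Y -> (i + m <= a.1)%N by move=> a aY; have [h1 _] := inSP iY aY.
rewrite (side_sec sX sY hXb hYb) (side_ntop sX sY hXb hYb) (ntop1 sX a0X) ?add1n ?nY; last first.
  by move=> b bX; apply: b0.
rewrite (_ : a0 \in X :|: Y); last by rewrite inE a0X.
rewrite /= !andbT; apply/andP; split.
  apply: inSI => b; rewrite inE => /orP[bX|bY].
    by have [h1 h2] := inSP iX bX; split; lia.
  by have [h1 h2] := inSP iY bY; split; lia.
apply/eqP; congr pair; apply/setP => b; rewrite !inE.
  case bX: (b \in X); first by rewrite (inb_of iX bX).
  by case bY: (b \in Y) => //=; rewrite (not_inb1 sY iY bY).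
case bY: (b \in Y); first by rewrite orbT (inb_of iY bY).
by case bX: (b \in X) => //=; rewrite (not_inb2 _ sX iX bX).
Qed.

Lemma split_m k i L m : (i + L.+1 <= N)%N -> (m < L.+2)%N ->
  \sum_(S | [&& secondary S, inS i L.+1 S & ntop S == k] && hasarc i (i + m).-1 S) weight R S
  = Wst i m * Wp k (i + m) (L.+1 - m).
Proof.
move=> hN hm.
case: (leqP m 1) => hm1.
  rewrite Wst_small ?mul0r; last lia.
  rewrite big_pred0 // => S; apply/negP => /andP[/and3P[sS _ _] /hasarcP[a [aS h1 h2]]].
  have := sec_arc sS aS; lia.
have hx : (i < N)%N by lia.
have hy : ((i + m).-1 < N)%N by lia.
pose a0 : A := (Ordinal hx, Ordinal hy).
have a01 : (a0.1 : nat) = i by [].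
have a02 : (a0.2 : nat) = (i + m).-1 by [].
rewrite /Wst /Wp big_distrlr pair_big /=.
rewrite (reindex_onto (fun p : {set A} * {set A} => p.1 :|: p.2)
   (fun S => ([set a in S | inb i m a], [set a in S | inb (i + m) (L.+1 - m) a]))) /=; last first.
  move=> S /andP[/and3P[sS iS _]]; rewrite (hasarcE _ a01 a02) => hS.
  apply/setP => b; rewrite !inE; case bS: (b \in S) => //=.
  apply: (decomp sS iS hS a01 a02) => //; lia.
symmetry; apply: eq_big => [[X Y] | [X Y] /andP[/and3P[sX iX _] /and3P[sY iY _]]] /=.
  rewrite (pair_pred k (L:=L) X Y _ _ a01 a02) //; lia.
rewrite (side_weight (mid := i + m)) //.
  by move=> a aX; have [_ h2] := inSP iX aX.
by move=> a aY; have [h1 _] := inSP iY aY.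
Qed.

Lemma W_rec k i L : (i + L.+1 <= N)%N ->
  W k i L.+1 = W k i.+1 L + \sum_(m < L.+2) Wst i m * Wp k (i + m) (L.+1 - m).
Proof.
move=> hN; rewrite /W (bigID (fun S => [exists a in S, at1 i a])) /= addrC; congr (_ + _).
  apply: eq_bigl => S; rewrite -inS_shift.
  by case: (secondary S); case: (ntop S == k); case: (inS i L.+1 S); case: [exists a in S, at1 i a].
transitivity (\sum_(S | [&& secondary S, inS i L.+1 S & ntop S == k] && [exists a in S, at1 i a])
   \sum_(m < L.+2) (if hasarc i (i + m).-1 S then weight R S else 0)).
  by apply: eq_bigr => S /andP[/and3P[sS iS _] hv]; rewrite one_term.
rewrite exchange_big /=; apply: eq_bigr => m _.
rewrite -(split_m k hN (ltn_ord m)) [RHS]big_mkcond [LHS]big_mkcond /=; apply: eq_bigr => S.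
case: ([&& _, _ & _]) => //=.
case hv: [exists a in S, at1 i a]; case ha: (hasarc _ _ S) => //=.
by move: (hasarc_at1 ha); rewrite hv.
Qed.


Lemma inS_full S : inS 0 N S.
Proof. by apply: inSI => a _; split; [|rewrite add0n]. Qed.

Lemma f0star_Wst : f0star R N = Wst 0 N.
Proof. by rewrite /f0star /Wst; apply: eq_bigl => S; rewrite inS_full /hasarc add0n. Qed.

Lemma f0_W : f0 R N = \sum_(k < K) W k 0 N.
Proof.
rewrite /f0 (sum_by_ntop _ (fun _ T => weight R T)); apply: eq_bigr => k _.
by apply: eq_bigl => S; rewrite inS_full.
Qed.

End Comb.
Unset Implicit Arguments. Set Strict Implicit.

Section Main.
Variable R : realType.
Local Notation F := (f0star R).
Local Notation geom := (fps_geom R).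
Definition Gk (k : nat) : fps R := fps_mul (fps_pow (fps_mul F geom) k) geom.
Definition Qp (G : fps R) (L : nat) : {poly R} := tr L G * tr L geom.

Lemma F_small L : (L <= 2)%N -> F L = 0.
Proof. by move=> hL; rewrite f0star_Wst Wst_small. Qed.

Lemma fps_mul_geom0 (G : fps R) : fps_mul G geom 0%N = G 0%N.
Proof. by rewrite /fps_mul big_ord1 /fps_geom mulr1. Qed.

Lemma Qp0 G L : G 0%N = 0 -> (Qp G L)`_0 = 0.
Proof.
move=> G0; rewrite /Qp -(rep_mul (rep_tr L G) (rep_tr L geom) 0%N) //.
by rewrite fps_mul_geom0.
Qed.

Lemma Gk_rep k L : Gk k L = ((Qp F L) ^+ k * tr L geom)`_L.
Proof.
by rewrite /Gk (rep_mul (rep_pow k (rep_mul (rep_tr L F) (rep_tr L geom))) (rep_tr L geom) L (leqnn L)).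
Qed.

Lemma Gk_vanish k L : (L < k)%N -> Gk k L = 0.
Proof. by move=> h; rewrite Gk_rep coef_low_expM // Qp0 // F_small. Qed.

Lemma Gk0 L : Gk 0 L = 1.
Proof. by rewrite Gk_rep expr0 mul1r coef_poly ltnS leqnn. Qed.

Lemma GkS k L : Gk k.+1 L = \sum_(j < L.+1) fps_mul F (Gk k) j.
Proof.
rewrite -rep_geom_sum Gk_rep.
have hG : rep L (Gk k) ((Qp F L) ^+ k * tr L geom).
  exact: rep_mul (rep_pow k (rep_mul (rep_tr L F) (rep_tr L geom))) (rep_tr L geom).
rewrite (rep_mul (rep_mul (rep_tr L F) hG) (rep_tr L geom) L (leqnn L)).
rewrite (_ : Qp F L ^+ k.+1 * tr L geom = tr L F * (Qp F L ^+ k * tr L geom) * tr L geom) //.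
by rewrite /Qp exprS; ring.
Qed.

Definition Gp (k : nat) (n : nat) : R := if k is k'.+1 then Gk k' n else 0.

Lemma Gk_rec k L : Gk k L.+1 = Gk k L + \sum_(m < L.+2) F m * Gp k (L.+1 - m).
Proof.
case: k => [|k].
  by rewrite !Gk0 big1 ?addr0 // => m _; rewrite mulr0.
by rewrite !GkS big_ord_recr.
Qed.

Lemma trunc_sum (H : nat -> R) L K' : (L < K')%N -> (forall k, (L < k)%N -> H k = 0) ->
  \sum_(k < K') H k = \sum_(k < L.+1) H k.
Proof.
move=> hK hH; rewrite [RHS](big_ord_widen K' H) // [RHS]big_mkcond; apply: eq_bigr => k _.
by case: ifP => // h; rewrite hH //; lia.
Qed.

Lemma main L : forall N i, (i + L <= N)%N ->
  Wst R N i L = F L /\ forall k, W R N k i L = Gk k L.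
Proof.
elim/ltn_ind: L => L IH.
have hst : forall N i, (i + L <= N)%N -> Wst R N i L = F L.
  move=> N i hN; case: (leqP L 2) => hL; first by rewrite Wst_small // F_small.
  have [L' eL] : exists L', L = L'.+3 by exists (L - 3)%N; lia.
  subst L; rewrite f0star_Wst !Wst_rec //.
  have e : forall N' i', (i' + L'.+3 <= N')%N ->
      \sum_(k < K N') phi R k * W R N' k i'.+1 L'.+1 = \sum_(k < L'.+2) phi R k * Gk k L'.+1.
    move=> N' i' h'.
    rewrite (eq_bigr (fun k : 'I_(K N') => phi R k * Gk k L'.+1)); last first.
      by move=> k _; rewrite ((IH L'.+1 _ N' i'.+1 _).2 k) //; lia.
    apply: (trunc_sum (fun k => phi R k * Gk k L'.+1)).
      rewrite /K; nia.
    by move=> k hk; rewrite Gk_vanish ?mulr0.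
  by rewrite !e //; lia.
move=> N i hN; split; first exact: hst.
move=> k; case: L IH hN hst => [|L'] IH hN hst.
  rewrite W0; case: k => [|k]; first by rewrite Gk0.
  by rewrite Gk_vanish.
rewrite W_rec // Gk_rec ((IH L' _ N i.+1 _).2 k) //; last lia.
congr (_ + _); apply: eq_bigr => m _.
have hm := ltn_ord m.
case: (posnP m) => hm0.
  by rewrite hm0 Wst_small // F_small // !mul0r.
have -> : Wst R N i m = F m.
  case: (ltnP m L'.+1) => hmL.
    by rewrite ((IH m _ N i _).1) //; lia.
  have em : (m : nat) = L'.+1 by lia.
  by rewrite em; apply: hst; lia.
case: k => [|k]; first by rewrite Wp0.
by rewrite WpS ((IH (L'.+1 - m)%N _ N (i + m)%N _).2 k) //; lia.
Qed.


Lemma F0 : F 0%N = 0.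
Proof. by rewrite F_small. Qed.

Lemma rhs_small (G : fps R) n : (n < 2)%N -> rhs_eq G n = 0.
Proof. by move=> h; rewrite /rhs_eq /fps_add /fps_scale !Xn2_shift h !mulr0 !addr0. Qed.

Lemma rhsE (G : fps R) L : G 0%N = 0 -> rhs_eq G L.+2 =
  6 / 16 * expR (2^-1) * (if L is 0 then 0 else 1)
  + (6 / 16 * expR 1 * ((tr L geom) ^+ 2 * tr L G)`_L
  + 6 / 16 * expR (-5) * ((Qp G L ^+ 2 * \sum_(k < L.+1) Qp G L ^+ k) * tr L geom)`_L).
Proof.
move=> G0; rewrite /rhs_eq /fps_add /fps_scale !Xn2_shift /= !subSS !subn0.
have hQ := rep_mul (rep_tr L G) (rep_tr L geom).
have hQ0 : fps_mul G geom 0%N = 0 by rewrite fps_mul_geom0.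
rewrite (rep_mul (rep_Xn L 1) (rep_tr L geom) L (leqnn L)) coefXnM.
rewrite (rep_mul (rep_pow 2 (rep_tr L geom)) (rep_tr L G) L (leqnn L)).
rewrite (rep_mul (rep_mul (rep_pow 2 hQ) (rep_inv1m hQ hQ0)) (rep_tr L geom) L (leqnn L)).
congr (_ * _ + _); case: L {hQ hQ0} => [|L] //=.
by rewrite coef_poly subn1 /= ltnS leqnSn.
Qed.

Lemma F_rec L : F L.+3 = \sum_(k < L.+2) phi R k * Gk k L.+1.
Proof.
rewrite f0star_Wst Wst_rec //.
rewrite (eq_bigr (fun k : 'I_(K L.+3) => phi R k * Gk k L.+1)); last first.
  by move=> k _; rewrite ((main L.+1 L.+3 1 _).2 k).
apply: (trunc_sum (fun k => phi R k * Gk k L.+1)); first by rewrite /K; nia.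
by move=> k hk; rewrite Gk_vanish ?mulr0.
Qed.

Lemma X2E L : ((tr L geom) ^+ 2 * tr L F)`_L = Gk 1 L.
Proof.
have e : (tr L geom) ^+ 2 * tr L F = Qp F L ^+ 1 * tr L geom by rewrite /Qp; ring.
by rewrite Gk_rep e.
Qed.

Lemma X3E L : ((Qp F L ^+ 2 * \sum_(k < L.+1) Qp F L ^+ k) * tr L geom)`_L
  = \sum_(k < L.+1) Gk k.+2 L.
Proof.
rewrite mulr_sumr mulr_suml coef_sum; apply: eq_bigr => k _.
by rewrite Gk_rep -exprD add2n.
Qed.

Lemma rhs_F : F = rhs_eq F.
Proof.
apply: functional_extensionality => n.
case: (ltnP n 2) => hn; first by rewrite rhs_small // F_small //; lia.
have [L ->] : exists L, n = L.+2 by exists (n - 2)%N; lia.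
rewrite (rhsE F L F0) X2E X3E.
case: L {hn} => [|L].
  by rewrite F_small // big_ord1 !Gk_vanish // !mulr0 !addr0.
have eR : \sum_(k < L.+2) Gk k.+2 L.+1 = \sum_(k < L) Gk k.+2 L.+1.
  by rewrite !big_ord_recr /= !Gk_vanish // !addr0.
have eL : \sum_(k < L.+2) phi R k * Gk k L.+1 =
   phi R 0 * Gk 0 L.+1 + (phi R 1 * Gk 1 L.+1 + \sum_(k < L) phi R k.+2 * Gk k.+2 L.+1).
  by rewrite !big_ord_recl.
rewrite F_rec eL eR Gk0 (big_distrr (6 / 16 * expR (-5))).
by rewrite /phi /tau /=.
Qed.

Lemma uniqF (G : fps R) : G 0%N = 0 -> G = rhs_eq G -> G = F.
Proof.
move=> G0 hG.
have key : forall n m, (m <= n)%N -> G m = F m.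
  elim=> [|n IH] m hm.
    have -> : m = 0%N by lia.
    by rewrite G0 F0.
  case: (ltnP m n.+1) => hmn; first by apply: IH; lia.
  have em : m = n.+1 by lia.
  subst m.
  rewrite (congr1 (fun f => f n.+1) hG) (congr1 (fun f => f n.+1) rhs_F).
  case: (ltnP n.+1 2) => h2; first by rewrite !rhs_small.
  have [L eL] : exists L, n.+1 = L.+2 by exists (n.+1 - 2)%N; lia.
  rewrite eL (rhsE G L G0) (rhsE F L F0).
  have eT : tr L G = tr L F by apply: eq_poly => i hi; apply: IH; lia.
  by rewrite /Qp eT.
by apply: functional_extensionality => n; apply: (key n n (leqnn n)).
Qed.

Lemma f0_eq : f0 R = fps_mul geom (fps_inv1m (fps_mul F geom)).
Proof.
apply: functional_extensionality => L.
rewrite f0_W (eq_bigr (fun k : 'I_(K L) => Gk k L)); last first.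
  by move=> k _; rewrite ((main L L 0 _).2 k).
rewrite (trunc_sum (fun k => Gk k L) L); [| by rewrite /K; nia | by move=> k hk; rewrite Gk_vanish].
have hQ := rep_mul (rep_tr L F) (rep_tr L geom).
rewrite (rep_mul (rep_tr L geom) (rep_inv1m hQ _) L (leqnn L)); last by rewrite fps_mul_geom0 F_small.
rewrite mulr_sumr coef_sum; apply: eq_bigr => k _.
by rewrite Gk_rep mulrC.
Qed.

End Main.

Theorem lemma3 (R : realType) :
  f0star R = rhs_eq (f0star R) /\
  (forall G : fps R, G 0%N = 0%R -> G = rhs_eq G -> G = f0star R) /\
  f0 R = fps_mul (fps_geom R) (fps_inv1m (fps_mul (f0star R) (fps_geom R))).
Proof. by split; [exact: rhs_F | split; [exact: uniqF | exact: f0_eq]]. Qed.
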